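(* Every graph $G$ contains a bipartite subgraph $H$ such that $$\kappa(H) \ge \max\{d(G)/4,\ (\chi(G)-1)/8\}.$$
   Context: Graphs are finite and simple; $\kappa$ is vertex connectivity, $\chi$ chromatic number, and $d(G)=|E(G)|/|V(G)|$ the density of a non-null graph $G$. *)

(* Defs.v *)
(* A finite simple graph on a finType V is a symmetric,
   irreflexive relation e : rel V (vertex set = all of V). *)
From mathcomp Require Import all_boot all_order all_algebra.
Set Implicit Arguments. Unset Strict Implicit. Unset Printing Implicit Defensive.
Import Order.TTheory GRing.Theory Num.Theory.

Section Graphs.
Variable V : finType.

Definition nedges (e : rel V) : nat :=
  #|[set [set x; y] | x in V, y in V & e x y]|.

Definition density (e : rel V) : rat := ((nedges e)%:R / (#|V|)%:R)%R.

Definition colorable (e : rel V) (k : nat) : bool :=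
  [exists f : {ffun V -> 'I_k}, [forall x, forall y, e x y ==> (f x != f y)]].

(* chromatic number: least k admitting a proper k-colouring
   (k = #|V| always works) *)
Definition chi (e : rel V) : nat :=
  \big[minn/#|V|]_(k < #|V|.+1 | colorable e k) k.

Definition connected_on (h : rel V) (T : {set V}) : bool :=
  [forall x in T, forall y in T,
     connect [rel u v | [&& h u v, u \in T & v \in T]] x y].

Definition k_connected (S : {set V}) (h : rel V) (k : nat) : bool :=
  (k < #|S|) &&
  [forall X : {set V}, ((X \subset S) && (#|X| < k)) ==> connected_on h (S :\: X)].

Definition kappa (S : {set V}) (h : rel V) : nat :=
  \max_(k < #|S|.+1 | k_connected S h k) k.

Definition is_subgraph (e : rel V) (S : {set V}) (h : rel V) : Prop :=
  symmetric h /\ forall x y, h x y -> [&& x \in S, y \in S & e x y].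

Definition bipartite (S : {set V}) (h : rel V) : Prop :=
  exists A : {set V}, A \subset S /\
    forall x y, x \in S -> y \in S -> h x y -> (x \in A) != (y \in A).

End Graphs.

(* Main.v *)
Require Import Defs.
From mathcomp Require Import all_boot all_order all_algebra.
From mathcomp Require Import zify.
Set Implicit Arguments. Unset Strict Implicit. Unset Printing Implicit Defensive.
Import Order.TTheory GRing.Theory Num.Theory.

Lemma bigmin_le m n (P : pred 'I_m) (j : 'I_m) (s : seq 'I_m) : j \in s -> P j -> \big[minn/n]_(i <- s | P i) i <= j.
Proof.
move=> js Pj; elim: s js => // x s IH; rewrite inE big_cons => /orP[/eqP <-|js].
  by rewrite Pj geq_minl.
case: (P x); last exact: IH.
by apply: leq_trans (geq_minr _ _) (IH js).
Qed.

Section Gen.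
Variable V : finType.
Implicit Types (h : rel V) (S W X : {set V}).

Definition pairs h S : {set V * V} := [set p | [&& p.1 \in S, p.2 \in S & h p.1 p.2]].
Definition D h S := #|pairs h S|.
Definition nb h S v : {set V} := [set w in S | h v w].

Lemma D_ext h h' S : (forall x y, x \in S -> y \in S -> h x y = h' x y) -> D h S = D h' S.
Proof.
move=> E; rewrite /D; apply: eq_card => p; rewrite !inE.
by case Hx: (p.1 \in S); case Hy: (p.2 \in S) => //=; rewrite E.
Qed.

Lemma D_sq h S : D h S <= #|S| * #|S|.
Proof.
rewrite /D -cardsX; apply: subset_leq_card; apply/subsetP=> p; rewrite !inE.
by case/and3P=> -> ->.
Qed.

Lemma cardU_le (T : finType) (A B : {set T}) : #|A :|: B| <= #|A| + #|B|.
Proof. by rewrite -cardsUI leq_addr. Qed.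

Lemma D_sub h S S1 S2 : pairs h S \subset pairs h S1 :|: pairs h S2 -> D h S <= D h S1 + D h S2.
Proof. by move=> sub; apply: leq_trans (subset_leq_card sub) (cardU_le _ _). Qed.

Lemma D_deg h S : D h S = \sum_(v in S) #|nb h S v|.
Proof.
rewrite /D -sum1_card.
transitivity (\sum_(v in S) \sum_(w | (w \in S) && h v w) 1).
  rewrite pair_big_dep; apply: eq_bigl => p; rewrite !inE //.
by apply: eq_bigr => v _; rewrite -sum1_card; apply: eq_bigl => w; rewrite !inE.
Qed.

Lemma D_del h S v : symmetric h -> v \in S ->
  D h S <= D h (S :\ v) + 2 * #|nb h S v|.
Proof.
move=> hs vS.
set P1 := [set (v, w) | w in nb h S v]; set P2 := [set (w, v) | w in nb h S v].
have sub : pairs h S \subset pairs h (S :\ v) :|: (P1 :|: P2).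
  apply/subsetP=> [[x y]]; rewrite !inE /= => /and3P[xS yS hxy].
  idtac.
  case: (eqVneq x v) => [exv|xv].
    subst x; apply/orP; right; apply/orP; left; apply/imsetP; exists y => //.
    by rewrite !inE yS hxy.
  case: (eqVneq y v) => [eyv|yv].
    subst y; apply/orP; right; apply/orP; right; apply/imsetP; exists x => //.
    by rewrite !inE xS hs hxy.
  by rewrite xS yS hxy.
apply: leq_trans (subset_leq_card sub) _.
apply: leq_trans (cardU_le _ _) _; rewrite leq_add2l.
apply: leq_trans (cardU_le _ _) _.
by rewrite mul2n -addnn leq_add // leq_imset_card.
Qed.

Lemma D_add h S v : symmetric h -> v \notin S ->
  D h S + 2 * #|nb h S v| <= D h (v |: S).
Proof.
move=> hs vS.
set P1 := [set (v, w) | w in nb h S v]; set P2 := [set (w, v) | w in nb h S v].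
have sub : pairs h S :|: (P1 :|: P2) \subset pairs h (v |: S).
  apply/subsetP=> [[x y]]; rewrite !inE /= => /orP[/and3P[-> -> ->]|/orP[]];
    first by rewrite !orbT.
    by case/imsetP=> w; rewrite !inE => /andP[wS hw] [-> ->]; rewrite eqxx wS hw orbT.
  by case/imsetP=> w; rewrite !inE => /andP[wS hw] [-> ->]; rewrite eqxx wS hs hw orbT.
apply: leq_trans (subset_leq_card sub).
have d1 : P1 :&: P2 = set0.
  apply/setP=> [[x y]]; rewrite !inE; apply/negP=> /andP[/imsetP[w _ [-> ->]] /imsetP[w' w'S [ev _]]].
  by move: w'S; rewrite !inE -ev (negbTE vS).
have d2 : pairs h S :&: (P1 :|: P2) = set0.
  apply/setP=> [[x y]]; rewrite !inE /=; apply/negP=> /andP[/and3P[xS yS _] /orP[]].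
    by case/imsetP=> w _ [ex _]; move: xS; rewrite ex (negbTE vS).
  by case/imsetP=> w _ [_ ey]; move: yS; rewrite ey (negbTE vS).
rewrite cardsU d2 cards0 subn0 cardsU d1 cards0 subn0 /D.
rewrite !card_imset; first by rewrite addnn mul2n.
  by move=> a b [].
by move=> a b [].
Qed.

Lemma kappa_ge S h j : k_connected S h j -> j <= kappa S h.
Proof.
move=> kc; have := kc; case/andP=> jS _.
have jlt : j < #|S|.+1 by apply: ltnW.
exact: (leq_bigmax_cond (Ordinal jlt) kc).
Qed.

Definition restr h S : rel V := fun x y => [&& h x y, x \in S & y \in S].

Section Mader.
Variable h : rel V.
Hypothesis hs : symmetric h.
Hypothesis hirr : irreflexive h.
Variable k : nat.
Definition Q S := (2*k <= #|S|) && (4*k*(#|S| - k) < D h S).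

Lemma mader S0 : Q S0 -> exists S, Q S /\ k_connected S (restr h S) k.+1.
Proof.
move=> QS0; case: (arg_minnP (fun S => #|S|) QS0) => S QS Smin.
exists S; split=> //.
have /andP[Sk DS] := QS.
have S2k : 2*k < #|S|.
  rewrite ltn_neqAle Sk andbT; apply/eqP=> E.
  have := D_sq h S; rewrite -E in DS *; nia.
have mindeg : forall v, v \in S -> 2*k < #|nb h S v|.
  move=> v vS; rewrite ltnNge; apply/negP=> dv.
  have Q' : Q (S :\ v).
    have := D_del hs vS; move: DS S2k; rewrite /Q (cardsD1 v S) vS; nia.
  have := Smin _ Q'; rewrite (cardsD1 v S) vS; lia.
have [x0 x0S] : exists x, x \in S.
  have : 0 < D h S by apply: leq_ltn_trans DS.
  by case/card_gt0P=> p; rewrite inE => /and3P[p1 _ _]; exists p.1.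
have Ssize : k.+1 < #|S|.
  have sub : nb h S x0 \subset S :\ x0.
    apply/subsetP=> w; rewrite !inE => /andP[wS hw]; rewrite wS andbT.
    by apply/eqP=> ew; move: hw; rewrite ew hirr.
  have := subset_leq_card sub; have := mindeg _ x0S; rewrite (cardsD1 x0 S) x0S; lia.
apply/andP; split => //.
apply/forallP=> X; apply/implyP=> /andP[XS Xk].
set T := S :\: X.
apply/forallP=> x; apply/implyP=> xT; apply/forallP=> y; apply/implyP=> yT.
set R := [rel u v | [&& restr h S u v, u \in T & v \in T]].
apply/negPn/negP=> nc.
set C := [set z | connect R x z].
have TS : T \subset S by apply: subsetDl.
have CT : forall z, z \in C -> z \in T.
  move=> z; rewrite inE => /connectP[p pth ->].
  elim: p x xT {nc C} pth => [|a p IH] b bT //= /andP[Rba pth].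
  by apply: IH pth; case/and3P: Rba.
have Ccl : forall u w, u \in C -> w \in T -> h u w -> w \in C.
  move=> u w cu wT huw; have uT := CT _ cu; move: cu; rewrite !inE => cu.
  apply: connect_trans cu (connect1 _).
  by rewrite /= /restr huw uT wT (subsetP TS _ uT) (subsetP TS _ wT).
have xC : x \in C by rewrite inE connect0.
have yC : y \notin C by rewrite inE.
clearbody C.
set S1 := C :|: X; set S2 := S :\: C.
have inT : forall z, (z \in T) = (z \notin X) && (z \in S) by move=> z; rewrite inE.
have sub : pairs h S \subset pairs h S1 :|: pairs h S2.
  apply/subsetP=> [[u w]]; rewrite inE /= => /and3P[uS wS huw].
  case uC: (u \in C).
    apply/setUP; left; rewrite inE /= !inE uC huw /=.
    case wX: (w \in X); rewrite ?orbT //.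
    by rewrite (Ccl u w) // inT wX wS.
  case wC: (w \in C).
    case uX: (u \in X).
      by apply/setUP; left; rewrite inE /= !inE uX wC huw orbT.
    by move: uC; rewrite (Ccl w u) // ?inT ?uX ?uS // hs.
  by apply/setUP; right; rewrite inE /= !inE uC wC uS wS huw.
have CS : C \subset S by apply/subsetP=> z /CT /(subsetP TS).
have CX : C :&: X = set0.
  apply/setP=> z; rewrite !inE; apply/negP=> /andP[/CT]; rewrite inT => /andP[/negbTE -> _].
  by [].
have cardS12 : #|S1| + #|S2| = #|S| + #|X|.
  rewrite cardsU CX cards0 subn0 cardsD (setIidPr CS).
  by have := subset_leq_card CS; move=> le; rewrite addnAC subnKC.
have xS : x \in S by apply: (subsetP TS).
have yS : y \in S by apply: (subsetP TS).
have S1S : S1 \subset S by rewrite subUset CS XS.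
have S2S : S2 \subset S by apply: subsetDl.
have S1lt : #|S1| < #|S|.
  apply: proper_card; apply/properP; split=> //; exists y => //.
  by rewrite !inE (negbTE yC) /=; move: yT; rewrite inT => /andP[].
have S2lt : #|S2| < #|S|.
  apply: proper_card; apply/properP; split=> //; exists x => //.
  by rewrite !inE xC.
have nQ1 : ~~ Q S1 by apply/negP=> q; have := Smin _ q; rewrite leqNgt S1lt.
have nQ2 : ~~ Q S2 by apply/negP=> q; have := Smin _ q; rewrite leqNgt S2lt.
have S1big : 2 * k < #|S1|.
  have sb : nb h S x \subset S1 :\ x.
    apply/subsetP=> w; rewrite !inE => /andP[wS hw].
    have -> : (w != x) by apply/eqP=> ew; move: hw; rewrite ew hirr.
    case wX: (w \in X); rewrite ?orbT //.
    by rewrite (Ccl x w) // inT wX wS.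
  have := subset_leq_card sb; have := mindeg _ xS.
  have x1 : x \in S1 by rewrite inE xC.
  rewrite (cardsD1 x S1) x1; clear; lia.
have S2big : 2 * k < #|S2|.
  have sb : nb h S y \subset S2 :\ y.
    apply/subsetP=> w; rewrite !inE => /andP[wS hw].
    have -> : (w != y) by apply/eqP=> ew; move: hw; rewrite ew hirr.
    rewrite wS andbT; apply/negP=> wC.
    by move: yC; rewrite (Ccl w y) // hs.
  have := subset_leq_card sb; have := mindeg _ yS.
  have y1 : y \in S2 by rewrite !inE yC yS.
  rewrite (cardsD1 y S2) y1; clear; lia.
have D1 : D h S1 <= 4 * k * (#|S1| - k).
  by move: nQ1; rewrite /Q negb_and -!leqNgt ltnW //=.
have D2 : D h S2 <= 4 * k * (#|S2| - k).
  by move: nQ2; rewrite /Q negb_and -!leqNgt ltnW //=.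
have := D_sub sub.
have e1 : 4 * k * (#|S1| - k) + 4 * k * (#|S2| - k) <= 4 * k * (#|S| - k).
  rewrite -mulnDr leq_mul2l; apply/orP; right; move: cardS12 Xk S1big S2big; clear; lia.
move: e1 D1 D2 DS; clear; lia.
Qed.
End Mader.

Section Cut.
Variable e : rel V.
Hypothesis e_sym : symmetric e.
Hypothesis e_irr : irreflexive e.
Definition cut (A : {set V}) : rel V := fun x y => e x y && ((x \in A) != (y \in A)).
Lemma cut_sym A : symmetric (cut A).
Proof. by move=> x y; rewrite /cut e_sym eq_sym. Qed.

Lemma maxcut W : exists A, D e W <= 2 * D (cut A) W.
Proof.
case: (ubnP #|W|) => n; elim: n W => // n IH W Wn.
case: (set_0Vmem W) => [->|[v vW]].
  exists set0; have := D_sq e set0; rewrite cards0 leqn0 => /eqP -> //.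
set W' := W :\ v.
have vW' : v \notin W' by rewrite !inE eqxx.
have W'n : #|W'| < n by move: Wn; rewrite (cardsD1 v W) vW.
have [A' HA'] := IH W' W'n.
set N := nb e W' v.
set c1 := #|N :&: A'|; set c0 := #|N :\: A'|.
have c01 : c1 + c0 = #|N| by apply: cardsID.
set A := if c1 <= c0 then v |: A' else A' :\ v.
have agree : D (cut A) W' = D (cut A') W'.
  apply: D_ext => x y xW yW; rewrite /cut /A.
  have xv : x != v by apply: contraNneq vW' => <-.
  have yv : y != v by apply: contraNneq vW' => <-.
  by case: ifP => _; rewrite !inE (negbTE xv) (negbTE yv).
have NW : nb e W v = N.
  apply/setP=> w; rewrite !inE; case: (eqVneq w v) => [->|//]; by rewrite e_irr andbF.
have Wdef : W = v |: W' by rewrite setD1K.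
have h1 := D_del e_sym vW; rewrite NW -/W' in h1.
have h2 := D_add (cut_sym A) vW'; rewrite -Wdef agree in h2.
have h3 : #|N| <= 2 * #|nb (cut A) W' v|.
  have ->: nb (cut A) W' v = if c1 <= c0 then N :\: A' else N :&: A'.
    apply/setP=> w; rewrite /A /cut; case: ifP => _; rewrite !inE eqxx /=;
    case: (eqVneq w v) => [->|wv]; rewrite ?e_irr ?andbF //= ?andbT; by case: (w \in A'); rewrite ?andbF ?andbT.
  case: ifP; rewrite -/c0 -/c1; lia.
exists A; move: h1 h2 h3 HA'; clear; lia.
Qed.

Lemma restr_sym h S : symmetric h -> symmetric (restr h S).
Proof. by move=> hs x y; rewrite /restr hs; case: (x \in S); case: (y \in S); rewrite ?andbF. Qed.

Lemma bigG (v0 : V) W : exists S h, [/\ S != set0, is_subgraph e S h, bipartite S h &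
   D e W <= 8 * #|W| * kappa S h].
Proof.
case: (posnP (D e W)) => [D0|Dpos].
  exists [set v0], (fun _ _ => false); split => //.
  - by rewrite -card_gt0 cards1.
  - by exists set0; split; [apply: sub0set|].
  - by rewrite D0.
have [A HA] := maxcut W.
set B := cut A in HA *.
have Bs : symmetric B by apply: cut_sym.
have Bi : irreflexive B by move=> x; rewrite /B /cut e_irr.
set k := D B W %/ (4 * #|W|).
have DW := D_sq e W.
have Wpos : 0 < #|W| by move: Dpos DW; clear; nia.
have kle : k * (4 * #|W|) <= D B W by apply: leq_divM.
have klt : D B W < k.+1 * (4 * #|W|) by apply: ltn_ceil; rewrite muln_gt0.
have DB := D_sq B W.
have DBpos : 0 < D B W by move: HA Dpos; clear; lia.
have QW : Q B k W.
  apply/andP; split.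
    move: kle DB Wpos; clear; nia.
  case: (posnP k) => [->|kpos]; first by rewrite muln0 mul0n.
  apply: leq_trans kle; move: kpos Wpos; clear; nia.
have [S [QS kc]] := mader Bs Bi QW.
have kk := kappa_ge kc.
exists S, (restr B S); split.
- by rewrite -card_gt0; case/andP: kc => kS _; move: kS; clear; lia.
- split; first exact: restr_sym.
  by move=> x y; rewrite /restr /B /cut => /and3P[/andP[-> _] -> ->].
- exists (S :&: A); split; first by apply: subsetIl.
  move=> x y xS yS; rewrite /restr /B /cut !inE xS yS /= => /andP[/andP[_ ->] _].
  by [].
- move: HA klt kk; clear; nia.
Qed.

Lemma degen c : 0 < c ->
  (forall W, W != set0 -> exists2 v, v \in W & #|nb e W v| < c) -> colorable e c.
Proof.
move=> cpos Hd.
suff: forall W, exists f : {ffun V -> 'I_c},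
    forall x y, x \in W -> y \in W -> e x y -> f x != f y.
  case/(_ setT)=> f Hf; apply/existsP; exists f; apply/forallP=> x; apply/forallP=> y.
  by apply/implyP; apply: Hf; rewrite inE.
move=> W; case: (ubnP #|W|) => n; elim: n W => // n IH W Wn.
case: (eqVneq W set0) => [->|Wne].
  by exists [ffun _ => Ordinal cpos] => x y; rewrite inE.
have [v vW dv] := Hd W Wne.
set W' := W :\ v.
have W'n : #|W'| < n by move: Wn; rewrite (cardsD1 v W) vW.
have [f' Hf'] := IH W' W'n.
set U := [set f' w | w in nb e W v].
have [col colU] : exists col, col \notin U.
  case: (pickP (fun i => i \notin U)) => [col colU|none]; first by exists col.
  have : [set: 'I_c] \subset U by apply/subsetP=> i _; move: (none i) => /negbFE.
  move/subset_leq_card; rewrite cardsT card_ord => cU.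
  have := leq_imset_card f' (nb e W v); rewrite -/U => cU'.
  by exfalso; move: (leq_trans cU cU'); rewrite leqNgt dv.
exists [ffun x => if x == v then col else f' x] => x y xW yW exy; rewrite !ffunE.
case: (eqVneq x v) => [exv|xv]; case: (eqVneq y v) => [eyv|yv].
- by move: exy; rewrite exv eyv e_irr.
- apply: contraNneq colU => ->; apply/imsetP; exists y => //.
  by rewrite !inE yW -exv exy.
- apply: contraNneq colU => <-; apply/imsetP; exists x => //.
  by rewrite !inE xW -eyv e_sym exy.
- by apply: Hf' => //; rewrite !inE ?xv ?yv ?xW ?yW.
Qed.

Lemma mindeg_sub (v0 : V) c : ~~ colorable e c ->
  exists2 W, W != set0 & forall v, v \in W -> c <= #|nb e W v|.
Proof.
move=> nc.
case: (posnP c) => [->|cpos].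
  by exists setT => //; apply/set0Pn; exists v0; rewrite inE.
case: (boolP [exists W : {set V}, (W != set0) && [forall v in W, c <= #|nb e W v|]]).
  case/existsP=> W /andP[Wn /forallP H]; exists W => // v vW.
  by move: (H v); rewrite vW.
move=> nE; case/negP: nc; apply: degen => // W Wn.
move: nE; rewrite negb_exists => /forallP/(_ W); rewrite Wn /= negb_forall => /existsP[v].
by rewrite negb_imply -ltnNge => /andP[vW lt]; exists v.
Qed.

Lemma D_ge_deg W c : (forall v, v \in W -> c <= #|nb e W v|) -> c * #|W| <= D e W.
Proof.
move=> H; rewrite D_deg mulnC -sum_nat_const; apply: leq_sum => v vW; exact: H.
Qed.

Lemma chi_le j : colorable e j -> chi e <= j.
Proof.
move=> cj; rewrite /chi.
case: (leqP j #|V|) => jV; last first.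
  apply: leq_trans (ltnW jV).
  by elim/big_rec: _ => // i x _ ih; apply: leq_trans (geq_minr _ _) ih.
have jlt : j < #|V|.+1 by [].
have := @bigmin_le _ #|V| (fun k : 'I_#|V|.+1 => colorable e k) (Ordinal jlt) _ (mem_index_enum _) cj.
by [].

Qed.

Lemma nedges_le : 2 * nedges e <= D e setT.
Proof.
set P := pairs e setT.
set L := [set p : V * V | enum_rank p.1 < enum_rank p.2].
set f := fun p : V * V => [set p.1; p.2].
have sE : [set [set x; y] | x in V, y in V & e x y] \subset f @: (P :&: L).
  apply/subsetP=> s /imset2P[x y _]; rewrite inE => /andP[_ exy] ->.
  case: (ltngtP (enum_rank x) (enum_rank y)) => [lt|gt|eq].
  - by apply/imsetP; exists (x, y); rewrite // !inE /= exy lt.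
  - apply/imsetP; exists (y, x); first by rewrite !inE /= e_sym exy gt.
    by rewrite /f /= setUC.
  - by move: exy; rewrite (enum_rank_inj (val_inj eq)) e_irr.
have c1 : nedges e <= #|P :&: L|.
  by apply: leq_trans (subset_leq_card sE) (leq_imset_card _ _).
have sw : [set (p.2, p.1) | p in P :&: L] \subset P :\: L.
  apply/subsetP=> q /imsetP[[x y]]; rewrite !inE /= => /andP[exy lt] ->.
  by rewrite /= -leqNgt ltnW // e_sym exy.
have c2 : #|P :&: L| <= #|P :\: L|.
  apply: leq_trans (subset_leq_card sw); rewrite card_imset //.
  by move=> [a b] [c d] [-> ->].
have := cardsID L P; rewrite /D -/P; move=> <-; rewrite mul2n -addnn; exact: leq_add c1 (leq_trans c1 c2).
Qed.
End Cut.
End Gen.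

Theorem corollary3p2 (V : finType) (e : rel V)
    (e_sym : symmetric e) (e_irr : irreflexive e) (V_nonnull : 0 < #|V|) :
  exists (S : {set V}) (h : rel V),
    [/\ S != set0, is_subgraph e S h, bipartite S h &
      (Num.max (density e / 4%:R) (((chi e)%:R - 1) / 8%:R) <= (kappa S h)%:R :> rat)%R].
Proof.
have [v0 _] := card_gt0P V_nonnull.
set a := (density e / 4%:R)%R; set b := (((chi e)%:R - 1) / 8%:R)%R.
have claimA : exists S h, [/\ S != set0, is_subgraph e S h, bipartite S h & (a <= (kappa S h)%:R :> rat)%R].
  have [S [h [S0 sg bp Dk]]] := bigG e_sym e_irr v0 setT.
  exists S, h; split => //.
  have c := nedges_le e_sym e_irr; rewrite cardsT in Dk.
  rewrite /a /density !ler_pdivrMr ?ltr0n // -!natrM ler_nat.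
  move: c Dk; clear; nia.
have claimB : exists S h, [/\ S != set0, is_subgraph e S h, bipartite S h & (b <= (kappa S h)%:R :> rat)%R].
  case: (posnP (chi e)) => [c0|cpos].
    have [S [h [S0 sg bp Dk]]] := bigG e_sym e_irr v0 setT.
    exists S, h; split => //.
    rewrite /b c0 ler_pdivrMr ?ltr0n // sub0r -natrM.
    by apply: (@le_trans _ _ 0%R); [rewrite oppr_le0 | rewrite ler0n].
  set c' := (chi e).-1.
  have nc : ~~ colorable e c'.
    apply/negP=> /chi_le; rewrite /c'; move: cpos; clear; lia.
  have [W Wn HW] := mindeg_sub e_sym e_irr v0 nc.
  have Dl := D_ge_deg HW.
  have [S [h [S0 sg bp Dk]]] := bigG e_sym e_irr v0 W.
  exists S, h; split => //.
  have Wpos : 0 < #|W| by rewrite card_gt0.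
  rewrite /b; have -> : ((chi e)%:R - 1 = c'%:R :> rat)%R by rewrite /c' -(prednK cpos) -natr1 addrK.
  rewrite ler_pdivrMr ?ltr0n // -natrM ler_nat.
  move: Dl Dk Wpos; clear; nia.
case: (lerP a b) => ab.
  by have [S [h [? ? ? hb]]] := claimB; exists S, h; split.
by have [S [h [? ? ? ha]]] := claimA; exists S, h; split.
Qed.
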